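(* Consider any divide-and-conquer algorithm for computing $\mu(\cdot)$ on $n$-column matrices of $O(k)$-bit integers, i.e. an assignment of an output (bit string) $s(A)$ to each such matrix $A$ (a sub-problem) together with a join such that for any two such matrices $A_0,A_1$, the output for their vertical concatenation $A_{01}$ ($A_0$'s rows followed by $A_1$'s rows) is computed by the join from $s(A_0)$ and $s(A_1)$ alone, and $\mu(A)$ is determined by $s(A)$. Then for every $r\le n(n+1)/2$, the output of a sub-problem of $r$ rows has size $\Omega(kr)$ bits (in the worst case over $r$-row matrices). In particular, solutions to sub-problems of size $O(n^2)$ require $\Omega(kn^2)$ bits.
   Context: For integers $i\le j$, $[i:j]=\{i,\dots,j\}$; $\mathbb{I}_n=\{[i:j]:1\le i\le j\le n\}$. For a matrix $A=[a_{ij}]$ with $n$ columns, $\mu_A(J)=\max_{k'\ge1}\sum_{i=1}^{k'}\sum_{j\in J}a_{ij}$ (maximum over row indices $k'$) for $J\in\mathbb{I}_n$, and the maximum top subarray sum of $A$ is $\mu(A)=\max_{J\in\mathbb{I}_n}\mu_A(J)$. *)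

(* Defs.v *)
From mathcomp Require Import all_boot all_order all_algebra.
Set Implicit Arguments. Unset Strict Implicit. Unset Printing Implicit Defensive.
Import Order.TTheory GRing.Theory Num.Theory.
Local Open Scope ring_scope.

(* Indices are 0-based: rows 0..m-1, columns 0..n-1.  The interval [i:j]
   (1-based in the paper) is represented by the pair (i,j) with i <= j < n. *)

Definition topsum (m n : nat) (A : 'M[int]_(m, n)) (kk i j : nat) : int :=
  \sum_(t < m | (t <= kk)%N) \sum_(l < n | (i <= l <= j)%N) A t l.

Definition maxl (s : seq int) : int := foldr Num.max (head 0 s) s.

Definition muJ (m n : nat) (A : 'M[int]_(m, n)) (i j : nat) : int :=
  maxl [seq topsum A kk i j | kk <- iota 0 m].

Definition intervals (n : nat) : seq (nat * nat) :=
  [seq (i, j) | i <- iota 0 n, j <- iota i (n - i)].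

Definition mu (m n : nat) (A : 'M[int]_(m, n)) : int :=
  maxl [seq muJ A p.1 p.2 | p <- intervals n].

Definition bounded (b m n : nat) (A : 'M[int]_(m, n)) : Prop :=
  forall i j, (absz (A i j) < 2 ^ b)%N.

(* Main.v *)
Require Import Defs.
From mathcomp Require Import all_boot all_order all_algebra zify.
Set Implicit Arguments. Unset Strict Implicit. Unset Printing Implicit Defensive.
Import Order.TTheory GRing.Theory Num.Theory.
Local Open Scope ring_scope.

Lemma sum_interval (F : nat -> int) n i j : (j < n)%N ->
  \sum_(l < n | (i <= l <= j)%N) F l = \sum_(i <= l < j.+1) F l.
Proof.
move=> Hj.
rewrite -(big_mkord (fun l => (i <= l <= j)%N) F).
rewrite (@big_nat_widenl _ _ _ i 0) // (big_nat_widen _ _ _ _ _ (Hj : (j.+1 <= n)%N)).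
by apply: eq_bigl => l /=; rewrite ltnS andbC.
Qed.

Definition vv (p : nat * nat) (l : nat) : int :=
  2 * ((p.1 <= l <= p.2)%N : nat)%:Z - 1 + ((l == p.1) : nat)%:Z + ((l == p.2) : nat)%:Z.

Lemma sum_vv p b c : (b <= c)%N ->
  \sum_(b <= l < c) vv p l =
  2 * ((minn c p.2.+1 - maxn b p.1)%N)%:Z - (c - b)%N%:Z
   + ((b <= p.1 < c)%N : nat)%:Z + ((b <= p.2 < c)%N : nat)%:Z.
Proof.
elim: c => [|c IH] Hb.
  have -> : b = 0%N by lia.
  rewrite big_geq //; lia.
case: (ltnP c b) => Hcb.
  have -> : b = c.+1 by lia.
  rewrite big_geq //; lia.
rewrite big_nat_recr //= IH // /vv. lia.
Qed.

Definition wv (p q : nat * nat) : int := \sum_(q.1 <= l < q.2.+1) vv p l.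

Lemma wv_self p : (p.1 <= p.2)%N -> wv p p = (p.2.+1 - p.1)%N%:Z + 2.
Proof. move=> H; rewrite /wv sum_vv; lia. Qed.

Lemma wv_lt1 p q : (p.1 <= p.2)%N -> (q.1 <= q.2)%N -> p <> q -> wv p q < wv p p.
Proof.
case: p q => [i j] [i' j'] /= H1 H2 Hne.
have : ~ (i = i' /\ j = j') by move=> [E1 E2]; apply: Hne; rewrite E1 E2.
rewrite /wv !sum_vv //=; lia.
Qed.

Lemma wv_lt2 p q : (p.1 <= p.2)%N -> (q.1 <= q.2)%N -> p <> q -> wv q p < wv p p.
Proof.
case: p q => [i j] [i' j'] /= H1 H2 Hne.
have : ~ (i = i' /\ j = j') by move=> [E1 E2]; apply: Hne; rewrite E1 E2.
rewrite /wv !sum_vv //=; lia.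
Qed.

Lemma wv_le p q n : (q.1 <= q.2 < n)%N -> wv p q <= n%:Z + 2.
Proof. case: q => [i' j'] /= H; rewrite /wv sum_vv //=; lia. Qed.

Lemma sum_eqind a b c : (b <= c)%N ->
  \sum_(b <= l < c) ((l == a) : nat)%:Z = ((b <= a < c)%N : nat)%:Z.
Proof.
elim: c => [|c IH] Hb.
  have -> : b = 0%N by lia.
  rewrite big_geq //; lia.
case: (ltnP c b) => Hcb.
  have -> : b = c.+1 by lia.
  rewrite big_geq //; lia.
rewrite big_nat_recr //= IH //; lia.
Qed.
Lemma mem_intervals n p : (p \in intervals n) = (p.1 <= p.2 < n)%N.
Proof.
apply/allpairsPdep/idP.
  move=> [i [j [Hi Hj ->]]] /=; move: Hi Hj; rewrite !mem_iota; lia.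
case: p => i j /= H; exists i, j; rewrite !mem_iota; split=> //; lia.
Qed.
Lemma uniq_intervals n : uniq (intervals n).
Proof.
apply: allpairs_uniq_dep; first exact: iota_uniq.
  by move=> i _; exact: iota_uniq.
by move=> [a b] [c d] _ _ /= [-> ->].
Qed.
Lemma size_intervals n : (size (intervals n) * 2 = n * n.+1)%N.
Proof.
rewrite /intervals size_allpairs_dep.
have -> : sumn [seq size (iota i (n - i)) | i <- iota 0 n] = \sum_(0 <= i < n) (n - i)%N.
  rewrite sumnE big_map /index_iota subn0.
  by apply: eq_bigr => i _; rewrite size_iota.
rewrite big_nat_rev /=.
have -> : \sum_(0 <= i < n) (n - (0 + n - i.+1))%N = \sum_(0 <= i < n) i.+1.
  by rewrite !big_nat; apply: eq_bigr => i /andP [_ Hi]; lia.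
elim: n => [|n IH]; first by rewrite big_geq.
rewrite big_nat_recr //= mulnDl IH; lia.
Qed.

Lemma maxl_ge_aux (s : seq int) h x : x \in s -> x <= foldr Num.max h s.
Proof.
elim: s => [|a s IH] //=; rewrite inE => /orP [/eqP ->|H].
  by rewrite le_max lexx.
by rewrite le_max (IH H) orbT.
Qed.

Lemma maxl_ge (s : seq int) x : x \in s -> x <= maxl s.
Proof. exact: maxl_ge_aux. Qed.

Lemma maxl_le_aux (s : seq int) h b : h <= b -> (forall x, x \in s -> x <= b) -> foldr Num.max h s <= b.
Proof.
move=> Hh; elim: s => [|a s IH] //= H.
rewrite ge_max H ?mem_head //= IH // => x Hx; apply: H; rewrite inE Hx orbT.
by [].
Qed.

Lemma maxl_le (s : seq int) b : s != [::] -> (forall x, x \in s -> x <= b) -> maxl s <= b.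
Proof.
case: s => [|a s] //= _ H; apply: maxl_le_aux => //; exact: H (mem_head _ _).
Qed.

Lemma mu_ge m n (A : 'M[int]_(m, n)) kk i j : (kk < m)%N -> (i <= j < n)%N ->
  topsum A kk i j <= mu A.
Proof.
move=> Hk Hij; apply: (@le_trans _ _ (muJ A i j)).
  by apply: maxl_ge; apply/mapP; exists kk => //; rewrite mem_iota.
by apply: maxl_ge; apply/mapP; exists (i, j) => //; rewrite mem_intervals.
Qed.

Lemma mu_le m n (A : 'M[int]_(m, n)) b : (0 < m)%N -> (0 < n)%N ->
  (forall kk i j, (kk < m)%N -> (i <= j < n)%N -> topsum A kk i j <= b) -> mu A <= b.
Proof.
move=> Hm Hn H; apply: maxl_le.
  have H0 : ((0, 0)%N \in intervals n) by rewrite mem_intervals /=.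
  by case: (intervals n) H0.
move=> x /mapP [[i j]]; rewrite mem_intervals /= => Hij ->.
apply: maxl_le; first by case: m Hm A H.
move=> y /mapP [kk]; rewrite mem_iota => Hk ->; apply: H => //; lia.
Qed.

Lemma topsum_col m0 m1 n (B : 'M[int]_(m0, n)) (A : 'M[int]_(m1, n)) kk i j :
  topsum (col_mx B A) kk i j = topsum B kk i j +
    \sum_(t < m1 | (m0 + t <= kk)%N) \sum_(l < n | (i <= l <= j)%N) A t l.
Proof.
rewrite /topsum big_mkcond big_split_ord /=; congr (_ + _).
  rewrite [RHS]big_mkcond; apply: eq_bigr => t _ /=.
  by case: ifP => // _; apply: eq_bigr => l _; rewrite col_mxEu.
rewrite [RHS]big_mkcond; apply: eq_bigr => t _ /=.
by case: ifP => // _; apply: eq_bigr => l _; rewrite col_mxEd.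
Qed.

Definition Jt n t := nth (0%N, 0%N) (intervals n) t.
Definition cum n k (X : nat -> nat) t l : int :=
  (2 ^ k)%N%:Z * vv (Jt n t) l + (X t)%:Z * ((l == (Jt n t).1) : nat)%:Z.
Definition c0 n k X t l : int := if t is t'.+1 then cum n k X t' l else 0.
Definition Amat n k r X : 'M[int]_(r, n) :=
  \matrix_(t < r, l < n) (c0 n k X t.+1 l - c0 n k X t l).
Definition Bmat n N s : 'M[int]_(N, n) := \matrix_(t < N, l < n) vv (Jt n s) l.
Definition G n k X (q : nat * nat) t : int := \sum_(q.1 <= l < q.2.+1) c0 n k X t l.

Lemma rowsumA n k r X q (t : 'I_r) : (q.2 < n)%N ->
  \sum_(l < n | (q.1 <= l <= q.2)%N) Amat n k r X t l = G n k X q t.+1 - G n k X q t.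
Proof.
move=> Hq; under eq_bigr do rewrite mxE.
by rewrite (sum_interval (fun l => c0 n k X t.+1 l - c0 n k X t l)) // sumrB.
Qed.

Lemma G0 n k X q : G n k X q 0 = 0.
Proof. by rewrite /G big1. Qed.

Lemma GS n k X q t : (q.1 <= q.2.+1)%N -> G n k X q t.+1 =
  (2 ^ k)%N%:Z * wv (Jt n t) q + (X t)%:Z * ((q.1 <= (Jt n t).1 < q.2.+1)%N : nat)%:Z.
Proof.
move=> Hq; by rewrite /G /= /cum big_split /= -!mulr_sumr (sum_eqind _ Hq).
Qed.

Lemma Apart n k r X q N kk : (q.2 < n)%N -> (kk < N + r)%N ->
  \sum_(t < r | (N + t <= kk)%N) \sum_(l < n | (q.1 <= l <= q.2)%N) Amat n k r X t l
  = if (N <= kk)%N then G n k X q (kk - N).+1 else 0.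
Proof.
move=> Hq Hk; under eq_bigr do rewrite rowsumA //.
case: ifP => HN; last first.
  by rewrite big1 // => t Ht; lia.
rewrite (eq_bigl (fun t : 'I_r => (0 <= t <= kk - N)%N)); last by move=> t /=; lia.
rewrite (sum_interval (fun t => G n k X q t.+1 - G n k X q t)); last by lia.
by rewrite telescope_sumr // G0 subr0.
Qed.

Lemma Bpart n N s q kk : (q.2 < n)%N ->
  \sum_(t < N | (t <= kk)%N) \sum_(l < n | (q.1 <= l <= q.2)%N) Bmat n N s t l
  = \sum_(t < N | (t <= kk)%N) wv (Jt n s) q.
Proof.
move=> Hq; apply: eq_bigr => t _; under eq_bigr do rewrite mxE.
by rewrite (sum_interval (fun l => vv (Jt n s) l)).
Qed.

Lemma Bpart_le N (P : pred 'I_N) (w b : int) : w <= b -> 0 <= b ->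
  \sum_(t < N | P t) w <= N%:Z * b.
Proof.
move=> H1 H2; rewrite big_mkcond /=.
apply: (@le_trans _ _ (\sum_(t < N) b)).
  by apply: ler_sum => t _; case: ifP.
by rewrite sumr_const card_ord -mulr_natl natz.
Qed.

Lemma Bpart_eq N (P : pred 'I_N) (w : int) : (forall t, P t) ->
  \sum_(t < N | P t) w = N%:Z * w.
Proof.
move=> H; rewrite (eq_bigl xpredT); last by move=> t; rewrite H.
by rewrite sumr_const card_ord -mulr_natl natz.
Qed.

Lemma Jt_valid n r t : (r <= size (intervals n))%N -> (t < r)%N ->
  ((Jt n t).1 <= (Jt n t).2 < n)%N.
Proof.
move=> Hr Ht; rewrite -mem_intervals /Jt; apply: mem_nth; exact: leq_trans Ht Hr.
Qed.

Lemma Jt_inj n r t s : (r <= size (intervals n))%N -> (t < r)%N -> (s < r)%N ->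
  t <> s -> Jt n t <> Jt n s.
Proof.
move=> Hr Ht Hs Hne E; apply: Hne; apply/eqP.
rewrite -(nth_uniq (0%N, 0%N) _ _ (uniq_intervals n)); last 2 first.
- exact: leq_trans Ht Hr.
- exact: leq_trans Hs Hr.
by apply/eqP.
Qed.

Lemma main_mu n k r X s : (0 < n)%N -> (r <= size (intervals n))%N ->
  (forall t, (X t < 2 ^ k)%N) -> (s < r)%N ->
  let N := ((2 ^ k) * (n + 3) + 1)%N in
  let w := wv (Jt n s) (Jt n s) in
  mu (col_mx (Bmat n N s) (Amat n k r X)) = N%:Z * w + (2 ^ k)%N%:Z * w + (X s)%:Z.
Proof.
move=> Hn Hr HX Hs N w.
have [Hv1 Hv2] : ((Jt n s).1 <= (Jt n s).2)%N /\ ((Jt n s).2 < n)%N.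
  by have := Jt_valid Hr Hs; lia.
have Hw : w = ((Jt n s).2.+1 - (Jt n s).1)%N%:Z + 2 by rewrite /w wv_self.
have HNdef : N = ((2 ^ k) * (n + 3) + 1)%N by [].
have Hwdef : wv (Jt n s) (Jt n s) = w by [].
clearbody N w.
apply/le_anti/andP; split.
  apply: mu_le => //; first by lia.
  move=> kk i j Hk Hij.
  rewrite topsum_col.
  rewrite /topsum (@Bpart n N s (i, j) kk) /=; last by lia.
  rewrite (@Apart n k r X (i, j) N kk) /=; [|lia|lia].
  have Hjn : (j < n)%N by lia.
  have Hw0 : 0 <= w by rewrite Hw.
  have HM : (0 < 2 ^ k)%N by rewrite expn_gt0.
  have HAt : forall t, (t < r)%N -> G n k X (i, j) t.+1 <=
      (2 ^ k)%N%:Z * wv (Jt n t) (i, j) + (2 ^ k)%N%:Z.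
    move=> t Ht; rewrite GS /=; last by lia.
    have := HX t; case: (_ && _) => /=; lia.
  have HMw0 : 0 <= (2 ^ k)%N%:Z * w by rewrite mulr_ge0.
  case: (eqVneq (i, j) (Jt n s)) => Eq.
    rewrite Eq.
    rewrite Hwdef.
    have HB := @Bpart_le N (fun t : 'I_N => (t <= kk)%N) w w (lexx _) Hw0.
    move: HB; set S := \sum_(_ < _ | _) _ => HB.
    case: ifP => HN; last by rewrite addr0; lia.
    have Ht : (kk - N < r)%N by lia.
    case: (eqVneq (kk - N)%N s) => Ets.
      rewrite Ets GS; last by lia.
      have -> : (((Jt n s).1 <= (Jt n s).1 < (Jt n s).2.+1)%N : nat) = 1%N.
        by rewrite leqnn ltnS Hv1.
      rewrite mulr1 Hwdef; lia.
    have Hlt := wv_lt2 Hv1 (proj1 (andP (Jt_valid Hr Ht))) (nesym (Jt_inj Hr Ht Hs (elimN eqP Ets))).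
    rewrite Hwdef in Hlt.
    have HA := HAt _ Ht; rewrite Eq in HA.
    have HMw : (2 ^ k)%N%:Z * wv (Jt n (kk - N)) (Jt n s) <= (2 ^ k)%N%:Z * (w - 1).
      by rewrite ler_wpM2l //; lia.
    move: HMw; rewrite mulrBr mulr1; lia.
  have Hij' : ((i, j).1 <= (i, j).2)%N by rewrite /=; lia.
  have Hlt := wv_lt1 Hv1 Hij' (nesym (elimN eqP Eq)).
  rewrite Hwdef in Hlt.
  have Hle : wv (Jt n s) (i, j) <= w - 1 by lia.
  have Hw1 : 0 <= w - 1 by lia.
  have HB := @Bpart_le N (fun t : 'I_N => (t <= kk)%N) (wv (Jt n s) (i, j)) (w - 1) Hle Hw1.
  move: HB; rewrite mulrBr mulr1; set S := \sum_(_ < _ | _) _ => HB.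
  have HNz : N%:Z = (2 ^ k)%N%:Z * n%:Z + 3 * (2 ^ k)%N%:Z + 1 by rewrite HNdef; lia.
  case: ifP => HN; last by rewrite addr0; lia.
  have Ht : (kk - N < r)%N by lia.
  have HA := HAt _ Ht.
  have HMn : (2 ^ k)%N%:Z * wv (Jt n (kk - N)) (i, j) <= (2 ^ k)%N%:Z * (n%:Z + 2).
    by rewrite ler_wpM2l //; apply: wv_le.
  move: HMn; rewrite mulrDr mulr2n mulrDr mulr1; lia.
have := @mu_ge _ _ (col_mx (Bmat n N s) (Amat n k r X)) (N + s)%N (Jt n s).1 (Jt n s).2 _ (Jt_valid Hr Hs).
rewrite topsum_col /topsum (@Bpart n N s (Jt n s) (N + s)%N) //.
rewrite (@Apart n k r X (Jt n s) N (N + s)%N) //; last by lia.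
rewrite leq_addr addKn GS; last by lia.
rewrite (@Bpart_eq N _ (wv (Jt n s) (Jt n s))); last by move=> t; have := ltn_ord t; lia.
have -> : (((Jt n s).1 <= (Jt n s).1 < (Jt n s).2.+1)%N : nat) = 1%N.
  by rewrite leqnn ltnS Hv1.
rewrite mulr1 addrA Hwdef; apply; by rewrite ltn_add2l.
Qed.

Lemma vv_bound p l : -1 <= vv p l <= 3.
Proof. rewrite /vv; lia. Qed.

Lemma c0_bound n k X t l : (forall t, (X t < 2 ^ k)%N) ->
  - (2 ^ k)%N%:Z <= c0 n k X t l /\ c0 n k X t l < 4 * (2 ^ k)%N%:Z.
Proof.
move=> HX; case: t => [|t] /=; first lia.
rewrite /cum.
have /andP [H1 H2] := vv_bound (Jt n t) l.
have HM : (0 <= (2 ^ k)%N%:Z) by [].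
have E1 : (2 ^ k)%N%:Z * (-1) <= (2 ^ k)%N%:Z * vv (Jt n t) l by rewrite ler_wpM2l.
have E2 : (2 ^ k)%N%:Z * vv (Jt n t) l <= (2 ^ k)%N%:Z * 3 by rewrite ler_wpM2l.
have := HX t.
case: (l == (Jt n t).1) => /=; rewrite ?mulr1 ?mulr0; lia.
Qed.

Lemma exp_bound k : (0 < k)%N -> (8 * 2 ^ k <= 2 ^ (4 * k))%N.
Proof.
move=> Hk; have -> : (8 * 2 ^ k = 2 ^ (k + 3))%N by rewrite expnD mulnC.
rewrite leq_exp2l //; lia.
Qed.

Lemma bounded_A n k r X : (0 < k)%N -> (forall t, (X t < 2 ^ k)%N) ->
  bounded (4 * k) (Amat n k r X).
Proof.
move=> Hk HX t l; rewrite mxE.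
have [A1 A2] := c0_bound n t.+1 l HX.
have [B1 B2] := c0_bound n t l HX.
have := exp_bound Hk; lia.
Qed.

Lemma bounded_B n N s k : (0 < k)%N -> bounded (4 * k) (Bmat n N s).
Proof.
move=> Hk t l; rewrite mxE.
have /andP [H1 H2] := vv_bound (Jt n s) l.
have := exp_bound Hk; have : (1 <= 2 ^ k)%N by rewrite expn_gt0. lia.
Qed.

Lemma bounded_col b m0 m1 n (B : 'M[int]_(m0, n)) (A : 'M[int]_(m1, n)) :
  bounded b B -> bounded b A -> bounded b (col_mx B A).
Proof.
move=> HB HA i j; rewrite -[i]splitK; case: (split i) => i' /=; [rewrite col_mxEu | rewrite col_mxEd]; by [].
Qed.

Definition code (s : seq bool) : nat := foldr (fun (b : bool) (acc : nat) => (nat_of_bool b + 2 * acc)%N) 1%N s.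

Lemma code_pos s : (0 < code s)%N.
Proof. elim: s => [|b s IH] //=; lia. Qed.

Lemma code_lt s : (code s < 2 ^ (size s).+1)%N.
Proof. elim: s => [|b s IH] //=; rewrite expnS; case: b => /=; lia. Qed.

Lemma code_inj : injective code.
Proof.
elim=> [|b s IH] [|b' s'] //=.
- have := code_pos s'; case: b' => /=; lia.
- have := code_pos s; case: b => /=; lia.
move=> E.
have Eb : b = b' by move: E; case: b; case: b' => //=; lia.
subst b'; congr (_ :: _); apply: IH; lia.
Qed.

Local Close Scope ring_scope.

Definition Xf r k (f : {ffun 'I_r -> 'I_(2 ^ k)}) (t : nat) : nat :=
  match @insub nat (fun t => (t < r)%N) 'I_r t with Some i => val (f i) | None => 0%N end.

Lemma Xf_bound (r k : nat) (f : {ffun 'I_r -> 'I_(2 ^ k)}) (t : nat) : (Xf f t < 2 ^ k)%N.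
Proof. rewrite /Xf; case: insub => [i|]; [exact: ltn_ord | by rewrite expn_gt0]. Qed.

Lemma Xf_val (r k : nat) (f : {ffun 'I_r -> 'I_(2 ^ k)}) (i : 'I_r) : Xf f i = val (f i).
Proof. by rewrite /Xf valK. Qed.

Theorem theorem6p7 :
  exists C d : nat, (0 < C)%N /\ (0 < d)%N /\
  forall (n k : nat), (0 < n)%N ->
  forall (s : forall m : nat, 'M[int]_(m, n) -> seq bool)
         (join : seq bool -> seq bool -> seq bool)
         (decode : seq bool -> int),
    (forall (m0 m1 : nat) (A0 : 'M[int]_(m0, n)) (A1 : 'M[int]_(m1, n)),
        (0 < m0)%N -> (0 < m1)%N ->
        bounded (C * k) A0 -> bounded (C * k) A1 ->
        s (m0 + m1)%N (col_mx A0 A1) = join (s m0 A0) (s m1 A1)) ->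
    (forall (m : nat) (A : 'M[int]_(m, n)),
        (0 < m)%N -> bounded (C * k) A -> decode (s m A) = mu A) ->
    forall r : nat, (0 < r)%N -> (r <= (n * n.+1) %/ 2)%N ->
      exists A : 'M[int]_(r, n),
        bounded (C * k) A /\ (k * r <= d * size (s r A))%N.
Proof.
exists 4%N, 1%N; split=> //; split=> //.
move=> n k Hn s join decode Hjoin Hdec r Hr0 Hr.
case: (posnP k) => Hk.
  exists 0%R; split; last by rewrite Hk.
  by move=> i j; rewrite mxE Hk.
have Hsz : (r <= size (intervals n))%N.
  have := size_intervals n; move: (size (intervals n)) => S HS; lia.
pose N := ((2 ^ k) * (n + 3) + 1)%N.
have key : forall f g : {ffun 'I_r -> 'I_(2 ^ k)},
    s r (Amat n k r (Xf f)) = s r (Amat n k r (Xf g)) -> f = g.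
  move=> f g E; apply/ffunP => i; apply: val_inj.
  have HBb := @bounded_B n N i k Hk.
  have HAf := @bounded_A n k r _ Hk (Xf_bound f).
  have HAg := @bounded_A n k r _ Hk (Xf_bound g).
  have HN : (0 < N)%N by rewrite /N addn1.
  have := Hdec _ _ (ltn_addr _ HN) (bounded_col HBb HAf).
  rewrite (Hjoin _ _ _ _ HN Hr0 HBb HAf) E -(Hjoin _ _ _ _ HN Hr0 HBb HAg).
  rewrite (Hdec _ _ (ltn_addr _ HN) (bounded_col HBb HAg)).
  rewrite (@main_mu n k r _ _ Hn Hsz (Xf_bound f) (ltn_ord i)).
  rewrite (@main_mu n k r _ _ Hn Hsz (Xf_bound g) (ltn_ord i)).
  by rewrite !Xf_val => /addrI [] E1; exact: esym E1.
case: (boolP [exists f : {ffun 'I_r -> 'I_(2 ^ k)}, (k * r <= size (s r (Amat n k r (Xf f))))%N]).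
  move=> /existsP [f Hf]; exists (Amat n k r (Xf f)); split; last by rewrite mul1n.
  exact: (@bounded_A n k r _ Hk (Xf_bound f)).
move=> /existsPn Hall.
have Hlt : forall f : {ffun 'I_r -> 'I_(2 ^ k)},
    (code (s r (Amat n k r (Xf f))) - 1 < 2 ^ (k * r) - 1)%N.
  move=> f; have := Hall f; rewrite -ltnNge => H1.
  have H2 := code_lt (s r (Amat n k r (Xf f))).
  have H3 := code_pos (s r (Amat n k r (Xf f))).
  have H4 : (2 ^ (size (s r (Amat n k r (Xf f)))).+1 <= 2 ^ (k * r))%N by rewrite leq_exp2l.
  lia.
pose h := fun f => Ordinal (Hlt f).
have hinj : injective h.
  move=> f g /(congr1 val) /= E; apply: key; apply: code_inj.
  have := code_pos (s r (Amat n k r (Xf f))); have := code_pos (s r (Amat n k r (Xf g))); lia.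
have := @leq_card _ _ h hinj; rewrite card_ffun !card_ord -expnM mulnC.
have : (0 < 2 ^ (k * r))%N by rewrite expn_gt0.
lia.
Qed.
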